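(* Let $K\ge 2$, $k\ge 2$ and $n\ge1$ be integers, let $\gamma>0$, and let $C_1\subseteq[K]^n$ be a code (with at least two codewords) with $\mathrm{LCS}(C_1)=\gamma n$. Then there exist an integer $T=T(K,\gamma,k)$ satisfying $T\le 32\cdot(2k/\gamma)^K$ and an injective map $\tau\colon[K]\to[k]^T$ such that the code $C_2\subseteq[k]^N$, $N=nT$, obtained by replacing each symbol of each codeword of $C_1$ by its image under $\tau$, has the following property: if $s$ is a common subsequence between two distinct codewords $c,\tilde c\in C_2$, then \[\operatorname{span} s\ \ge\ (k+1)\operatorname{len} s-4\gamma kN.\] In particular, $\mathrm{LCS}(C_2)\le\frac{2+4\gamma k}{k+1}N<\left(\frac{2}{k+1}+4\gamma\right)N$.
   Context: $[k]=\{1,\dots,k\}$. Symbols in words are treated as distinguishable positions. A subsequence of a word $w$ is obtained by deleting symbols; a subword is a subsequence of consecutive symbols. The span $\operatorname{span}_w w'$ of a subsequence $w'$ of $w$ is the length of the shortest subword of $w$ containing $w'$. A common subsequence of words $w_1,w_2$ is a pair $s=(w_1',w_2')$ of subsequences of $w_1$ and $w_2$ respectively that are equal as words; $\operatorname{len} s$ is their common length and $\operatorname{span} s=\operatorname{span}_{w_1}w_1'+\operatorname{span}_{w_2}w_2'$. $\mathrm{LCS}(w_1,w_2)$ is the maximum length of a common subsequence, and $\mathrm{LCS}(C)=\max_{c_1\ne c_2\in C}\mathrm{LCS}(c_1,c_2)$ for a code $C$. *)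

(* Defs.v *)
From mathcomp Require Import all_boot all_order all_algebra.
Set Implicit Arguments. Unset Strict Implicit. Unset Printing Implicit Defensive.

(* A subsequence of a word w is represented by a mask m : bitseq with
   size m = size w (positions are distinguishable). *)

Definition positions (m : bitseq) : seq nat :=
  [seq i <- iota 0 (size m) | nth false m i].

Definition span_mask (m : bitseq) : nat :=
  if positions m is x :: s then (last x s - x).+1 else 0.

Definition is_common_subseq (T : eqType) (w1 w2 : seq T) (m1 m2 : bitseq) : bool :=
  [&& size m1 == size w1, size m2 == size w2 & mask m1 w1 == mask m2 w2].

Definition cs_len (T : eqType) (w1 : seq T) (m1 : bitseq) : nat := size (mask m1 w1).
Definition cs_span (m1 m2 : bitseq) : nat := span_mask m1 + span_mask m2.

Definition LCS (T : eqType) (w1 w2 : seq T) : nat :=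
  \max_(m1 : (size w1).-tuple bool) \max_(m2 : (size w2).-tuple bool)
     (if mask m1 w1 == mask m2 w2 then size (mask m1 w1) else 0).

Definition LCS_code (T : eqType) (C : seq (seq T)) : nat :=
  \max_(c1 <- C) \max_(c2 <- C | c2 != c1) LCS c1 c2.

Definition encode (K k T : nat) (tau : 'I_K -> T.-tuple 'I_k) (c : seq 'I_K) : seq 'I_k :=
  flatten [seq val (tau a) | a <- c].

(* Main.v *)
Require Import Defs.
From mathcomp Require Import all_boot all_order all_algebra.
From mathcomp Require Import zify lra.
From Stdlib Require Import Classical_Prop.
Set Implicit Arguments. Unset Strict Implicit. Unset Printing Implicit Defensive.

Lemma mulS_le (a b c : nat) : a < b -> c * a + c <= c * b.
Proof. by move=> h; rewrite addnC -mulnS leq_mul2l h orbT. Qed.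

Lemma mixed (k1 M p q p' q' r1 r2 : nat) : 0 < r1 -> 0 < r2 -> M * r1 <= r2 -> p < p' -> q < q' ->
  (p %/ r1) %% k1.+1 = (q %/ r2) %% k1.+1 -> (p' %/ r1) %% k1.+1 = (q' %/ r2) %% k1.+1 ->
  M*(p+q) + M*(k1*(p%%r1)) + k1*(r2*(q%/r2)) + M*(k1.+2) <=
  M*(p'+q') + M*(k1*(p'%%r1)) + k1*(r2*(q'%/r2)).
Proof.
move=> hr1 r2p hr12 hp hq e1 e2.
have hqq : q %/ r2 <= q' %/ r2 by apply: leq_div2r; apply: ltnW.
have ho : p %% r1 < r1 by rewrite ltn_mod.
have ho' : p' %% r1 < r1 by rewrite ltn_mod.
have huu : p %/ r1 <= p' %/ r1 by apply: leq_div2r; apply: ltnW.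
have dp := divn_eq p r1. have dp' := divn_eq p' r1.
case: (ltngtP (q %/ r2) (q' %/ r2)) => hqr; last first.
-
  have es : (p %/ r1) %% k1.+1 = (p' %/ r1) %% k1.+1 by rewrite e1 e2 hqr.
  suff H : p + q + k1*(p%%r1) + k1.+2 <= p' + q' + k1*(p'%%r1).
    rewrite hqr. have := leq_mul2l M (p + q + k1*(p%%r1) + k1.+2) (p' + q' + k1*(p'%%r1)).
    rewrite H orbT !mulnDr => /idP. clear. lia.
  move: (p %/ r1) (p' %/ r1) (p %% r1) (p' %% r1) dp dp' huu es ho ho' => u u' o o' dp dp' huu es ho ho'.
  clear e1 e2 hqr hqq.
  move: huu; rewrite leq_eqVlt => /orP [/eqP hu | hu].
  + subst u'. have hoo : o < o' by clear es; lia.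
    have := mulS_le k1 hoo. clear es. lia.
  + have hk' : k1.+1 <= u' - u.
      have := (eqn_mod_dvd k1.+1 (ltnW hu)). rewrite es eqxx => /esym /dvdn_leq; apply. clear es. lia.
    clear es.
    have h1 : (u + k1.+1) * r1 <= u' * r1 by rewrite leq_mul2r; apply/orP; right; lia.
    have h2 := mulS_le k1 ho.
    have h3 : (u + k1.+1) * r1 = u * r1 + k1 * r1 + r1 by rewrite mulnDl mulSn; lia.
    lia.
- exfalso; move: hqr hqq; clear. lia.
- have hL := mulS_le r2 hqr.
  have hA : M * (k1 * (p %% r1) + k1) <= k1 * r2.
    rewrite -[_ + k1]addnC -mulnS mulnCA leq_mul2l; apply/orP; right.
    apply: leq_trans hr12; rewrite leq_mul2l ho orbT //.
  have hB : k1 * (r2 * (q %/ r2)) + k1 * r2 <= k1 * (r2 * (q' %/ r2)) by rewrite -mulnDr leq_mul2l hL orbT.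
  have hC : M * (p + q) + M * 2 <= M * (p' + q') by rewrite -mulnDr leq_mul2l; apply/orP; right; clear -hp hq; lia.
  have hD : M * (k1.+2) = M * 2 + M * k1 by rewrite -mulnDr.
  rewrite mulnDr in hA.
  move: hA hB hC hD.
  move: (M * (k1 * (p %% r1))) (k1 * (r2 * (q %/ r2))) (k1 * (r2 * (q' %/ r2))) (M * (k1 * (p' %% r1))).
  clear. move=> *. lia.
Qed.

Definition rel2 (x y : nat * nat) := (x.1 < y.1) && (x.2 < y.2).

Lemma rel2_trans : transitive rel2.
Proof. move=> y x z /andP [h1 h2] /andP [h3 h4]; apply/andP; split; apply: ltn_trans; eauto. Qed.

Lemma count_le_in (T : eqType) (a b : pred T) (s : seq T) :
  {in s, forall y, a y -> b y} -> count a s <= count b s.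
Proof.
elim: s => //= y s IH h.
apply: leq_add; last by apply: IH => z hz; apply: h; rewrite inE hz orbT.
case ha: (a y) => //=. by rewrite (h y) ?inE ?eqxx.
Qed.

Lemma count_split (T : Type) (a p : pred T) (s : seq T) :
  count a s <= count (predI a p) s + count (predC p) s.
Proof.
elim: s => //= y s IH.
rewrite addnACA; apply: leq_add => //.
by case: (a y); case: (p y).
Qed.

Lemma block_count (T i : nat) (l : seq nat) : 0 < T -> sorted ltn l -> count (fun a => a %/ T == i) l <= T.
Proof.
move=> hT hs.
rewrite -size_filter.
have hu : uniq [seq a <- l | a %/ T == i].
  by apply: filter_uniq; apply: sorted_uniq hs; [exact: ltn_trans | exact: ltnn].
have := uniq_leq_size hu (s2 := iota (i * T) T).
rewrite size_iota; apply=> a; rewrite mem_filter mem_iota => /andP [/eqP ha _].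
have ea := divn_eq a T; rewrite ha in ea.
have h := ltn_mod a T; rewrite hT in h.
move: ea h; move: (a %% T) => o ->. clear. move=> h. apply/andP; split; lia.
Qed.

Lemma count_fst (T : nat) (s : seq (nat * nat)) (P : nat -> bool) :
  count (fun y => P y.1) s = count P (map fst s).
Proof. by rewrite count_map. Qed.

Lemma sorted_fst s : sorted rel2 s -> sorted ltn (map fst s).
Proof.
case: s => //= x s. elim: s x => //= y s IH x /andP [/andP [h1 _] h2].
by rewrite h1 IH.
Qed.

Lemma sorted_snd s : sorted rel2 s -> sorted ltn (map snd s).
Proof.
case: s => //= x s. elim: s x => //= y s IH x /andP [/andP [_ h1] h2].
by rewrite h1 IH.
Qed.

Lemma chain_count (T : nat) (c1 c2 : nat -> nat) (s : seq (nat * nat)) : 0 < T -> sorted rel2 s ->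
  exists I J : seq nat, [/\ sorted ltn I /\ sorted ltn J, map c1 I = map c2 J,
     {subset I <= [seq y.1 %/ T | y <- s]}, {subset J <= [seq y.2 %/ T | y <- s]} &
     count (fun y => c1 (y.1 %/ T) == c2 (y.2 %/ T)) s <= 2 * T * size I].
Proof.
move=> hT0; elim: {s}(size s).+1 {-2}s (ltnSn (size s)) => // m IH [|x s] hsz hs.
  by exists [::], [::].
have hpath : path rel2 x s by [].
move: (hpath); rewrite path_sortedE; last exact: rel2_trans.
case/andP=> hall hs'.
case: (boolP (c1 (x.1 %/ T) == c2 (x.2 %/ T))) => hx; last first.
  have [I [J [[h1 h2] h3 h4 h5 h6]]] := IH s (leq_trans (ltnSn _) hsz) hs'.
  exists I, J; split => //.
  - by move=> a /h4 ha; rewrite /= inE ha orbT.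
  - by move=> a /h5 ha; rewrite /= inE ha orbT.
  - by rewrite /= (negbTE hx) add0n.
pose Bp := fun y : nat * nat => (x.1 %/ T < y.1 %/ T) && (x.2 %/ T < y.2 %/ T).
have hsB : sorted rel2 (filter Bp s) by apply: sorted_filter => //; exact: rel2_trans.
have hszB : size (filter Bp s) < m by rewrite size_filter; apply: leq_ltn_trans (count_size _ _) _; by move: hsz; rewrite /= ltnS.
have [I [J [[h1 h2] h3 h4 h5 h6]]] := IH _ hszB hsB.
exists (x.1 %/ T :: I), (x.2 %/ T :: J); split; first split.
- rewrite /= path_sortedE; last exact: ltn_trans.
  rewrite h1 andbT; apply/allP => a /h4 /mapP [y]; rewrite mem_filter => /andP [/andP [hy _] _] ->. by [].
- rewrite /= path_sortedE; last exact: ltn_trans.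
  rewrite h2 andbT; apply/allP => a /h5 /mapP [y]; rewrite mem_filter => /andP [/andP [_ hy] _] ->. by [].
- by rewrite /= h3 (eqP hx).
- move=> a; rewrite inE => /orP [/eqP -> | /h4 /mapP [y]]; first by rewrite inE eqxx.
  rewrite mem_filter => /andP [_ hy] ->. by rewrite /= inE (map_f (fun y : nat * nat => y.1 %/ T) hy) orbT.
- move=> a; rewrite inE => /orP [/eqP -> | /h5 /mapP [y]]; first by rewrite inE eqxx.
  rewrite mem_filter => /andP [_ hy] ->. by rewrite /= inE (map_f (fun y : nat * nat => y.2 %/ T) hy) orbT.
- rewrite /= hx add1n.
  have e1 := count_split (fun y : nat * nat => c1 (y.1 %/ T) == c2 (y.2 %/ T)) Bp s.
  rewrite -count_filter in e1.
  have e2 : count (predC Bp) s <= count (fun y : nat*nat => y.1 %/ T == x.1 %/ T) s + count (fun y : nat*nat => y.2 %/ T == x.2 %/ T) s.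
    rewrite -count_predUI; apply: leq_trans (leq_addr _ _).
    apply: count_le_in => y hy /=. rewrite /Bp negb_and -!leqNgt.
    have := allP hall y hy => /andP [ha hb].
    have ha' : x.1 %/ T <= y.1 %/ T by apply: leq_div2r; apply: ltnW.
    have hb' : x.2 %/ T <= y.2 %/ T by apply: leq_div2r; apply: ltnW.
    case/orP => hh; apply/orP; [left|right]; apply/eqP; apply/anti_leq; rewrite ?hh ?ha' ?hb' //.
  have e3 : (count (fun y : nat*nat => y.1 %/ T == x.1 %/ T) s).+1 <= T.
    have := block_count (x.1 %/ T) hT0 (sorted_fst hs).
    by rewrite /= eqxx add1n count_map.
  have e4 : (count (fun y : nat*nat => y.2 %/ T == x.2 %/ T) s) <= T.
    have := block_count (x.2 %/ T) hT0 (sorted_snd hs).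
    by rewrite /= count_map => h; apply: leq_trans h; apply: leq_addl.
  rewrite mulnS.
  move: e1 e2 e3 e4 h6; rewrite /Bp.
  move: (count _ s) (count _ (filter _ s)) (count (predC _) s) (count (fun y : nat*nat => y.1 %/ T == _) s)
     (count (fun y : nat*nat => y.2 %/ T == _) s) (2 * T * size I) => *.
  lia.
Qed.

Section Core.
Variables (k1 M K T : nat).
Hypotheses (hk : 1 <= k1) (hM : 2 <= M) (hK : 2 <= K) (hT : T = k1.+1 * M ^ K.-1).
Variables (c1 c2 : nat -> nat).
Hypotheses (hc1 : forall i, c1 i < K) (hc2 : forall i, c2 i < K).

Definition rr (c : nat -> nat) p := M ^ c (p %/ T).
Definition sym c p := (p %/ rr c p) %% k1.+1.
Definition Lam c p := rr c p * (p %/ rr c p).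
Definition Psi p q := if rr c1 p < rr c2 q then k1 * (p %% rr c1 p)
  else if rr c2 q < rr c1 p then k1 * (q %% rr c2 q) else 0.
Definition Cb := k1 * M ^ (K - 2).
Definition F p q := M*(p+q) + M * Psi p q + k1 * (Lam c1 p + Lam c2 q) + M * Cb * (p %/ T + q %/ T).
Definition eqpt p q : bool := c1 (p %/ T) == c2 (q %/ T).

Lemma rr_pos c p : 0 < rr c p.
Proof. by rewrite /rr expn_gt0; lia. Qed.

Lemma Tpos : 0 < T.
Proof. by rewrite hT muln_gt0 expn_gt0; lia. Qed.

Lemma rr_dvd c p : (forall i, c i < K) -> rr c p %| T.
Proof.
move=> hc; rewrite hT /rr; apply: dvdn_mull; apply: dvdn_exp2l.
have := hc (p %/ T); lia.
Qed.

Lemma rr_lt c c' p q : rr c p < rr c' q -> M * rr c p <= rr c' q.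
Proof.
rewrite /rr ltn_exp2l; last lia.
move=> h; rewrite -expnS leq_exp2l //; lia.
Qed.

Lemma rr_short c c' p q : (forall i, c' i < K) -> rr c p < rr c' q -> rr c p <= M ^ (K - 2).
Proof.
move=> hc; rewrite /rr ltn_exp2l; last lia.
move=> h; rewrite leq_exp2l; last lia.
have := hc (q %/ T); lia.
Qed.

Lemma Psi_le p q : Psi p q + k1 <= Cb.
Proof.
rewrite /Psi /Cb.
case: ifP => h1.
  rewrite addnC -mulnS leq_mul2l; apply/orP; right.
  apply: leq_trans (rr_short hc2 h1). by rewrite ltn_mod rr_pos.
case: ifP => h2.
  rewrite addnC -mulnS leq_mul2l; apply/orP; right.
  apply: leq_trans (rr_short hc1 h2). by rewrite ltn_mod rr_pos.
rewrite add0n -{1}(muln1 k1) leq_mul2l expn_gt0; lia.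
Qed.

Lemma Lam_le c p : Lam c p <= p.
Proof. by rewrite /Lam mulnC leq_trunc_div. Qed.

Lemma Lam_mono c p p' : (forall i, c i < K) -> p <= p' -> Lam c p <= Lam c p'.
Proof.
move=> hc hpp.
case: (eqVneq (p %/ T) (p' %/ T)) => hb.
  rewrite /Lam /rr hb leq_mul2l leq_div2r ?orbT //.
have hlt : p %/ T < p' %/ T by rewrite ltn_neqAle hb leq_div2r.
apply: leq_trans (Lam_le c p) _.
have h1 : p < (p %/ T).+1 * T by rewrite ltn_ceil // Tpos.
have h2 : (p %/ T).+1 * T <= (p' %/ T) * T by rewrite leq_mul2r hlt orbT.
have h3 : (p' %/ T) * T <= Lam c p'.
  have hd : rr c p' %| (p' %/ T) * T by apply: dvdn_mull; apply: rr_dvd.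
  rewrite /Lam -{1}(divnK hd) mulnC leq_mul2l; apply/orP; right.
  apply: leq_div2r. by rewrite leq_trunc_div.
exact: leq_trans (ltnW (leq_trans h1 h2)) h3.
Qed.

Lemma arB (x x' ps ps' l l' b b' m2 mk mcb e : nat) : b + mcb <= b' -> x + m2 <= x' -> ps + mk <= mcb -> l <= l' ->
  x + ps + l + b + (m2 + mk) <= x' + ps' + l' + b' + e.
Proof. lia. Qed.

Lemma arM1 (x x' ps ps' l1 l1' l2 l2' b m e : nat) : x + ps + l2 + m <= x' + ps' + l2' -> l1 <= l1' ->
  x + ps + (l1 + l2) + b + m <= x' + ps' + (l1' + l2') + b + e.
Proof. lia. Qed.

Lemma arM2 (x x' ps ps' l1 l1' l2 l2' b m e : nat) : x + ps + l1 + m <= x' + ps' + l1' -> l2 <= l2' ->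
  x + ps + (l1 + l2) + b + m <= x' + ps' + (l1' + l2') + b + e.
Proof. lia. Qed.

Lemma arE (x x' l l' b m2 mk : nat) : x + m2 <= x' -> l <= l' ->
  x + 0 + l + b + (m2 + mk) <= x' + 0 + l' + b + mk.
Proof. lia. Qed.

Lemma step p q p' q' : p < p' -> q < q' -> sym c1 p = sym c2 q -> sym c1 p' = sym c2 q' ->
  F p q + M * (k1.+2) <= F p' q' + M * k1 * eqpt p q.
Proof.
move=> hp hq e1 e2.
have L1 := Lam_mono hc1 (ltnW hp). have L2 := Lam_mono hc2 (ltnW hq).
have B1 : p %/ T <= p' %/ T by apply: leq_div2r; apply: ltnW.
have B2 : q %/ T <= q' %/ T by apply: leq_div2r; apply: ltnW.
have hPs := Psi_le p q.
rewrite /F.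
have hL : k1 * (Lam c1 p + Lam c2 q) <= k1 * (Lam c1 p' + Lam c2 q') by rewrite leq_mul2l; apply/orP; right; apply: leq_add.
case: (boolP ((p %/ T == p' %/ T) && (q %/ T == q' %/ T))) => hb; last first.
  have hB : p %/ T + q %/ T < p' %/ T + q' %/ T.
    move: hb B1 B2; rewrite negb_and => /orP [] /eqP hn; move: hn; generalize (p %/ T) (p' %/ T) (q %/ T) (q' %/ T); clear=> *; lia.
  have hB' : M * Cb * (p %/ T + q %/ T) + M * Cb <= M * Cb * (p' %/ T + q' %/ T).
    by rewrite addnC -mulnS leq_mul2l hB orbT.
  have hC : M * (p + q) + M * 2 <= M * (p' + q') by rewrite -mulnDr leq_mul2l; apply/orP; right; clear -hp hq; lia.
  have hP : M * Psi p q + M * k1 <= M * Cb by rewrite -mulnDr leq_mul2l hPs orbT.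
  have hD : M * (k1.+2) = M * 2 + M * k1 by rewrite -mulnDr.
  rewrite hD; exact: arB hB' hC hP hL.
case/andP: hb => /eqP hb1 /eqP hb2.
have hB : M * Cb * (p %/ T + q %/ T) = M * Cb * (p' %/ T + q' %/ T) by rewrite hb1 hb2.
have r1e : rr c1 p' = rr c1 p by rewrite /rr hb1.
have r2e : rr c2 q' = rr c2 q by rewrite /rr hb2.
move: e1 e2; rewrite /sym r1e r2e => e1 e2.
rewrite /Psi r1e r2e.
case: (ltngtP (rr c1 p) (rr c2 q)) => hr.
- have := mixed (rr_pos c1 p) (rr_pos c2 q) (rr_lt hr) hp hq e1 e2.
  rewrite /Lam r1e r2e in L1 L2 *.
  rewrite hB !mulnDr => H; apply: arM1 H _.
  by rewrite leq_mul2l L1 orbT.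
- have := mixed (rr_pos c2 q) (rr_pos c1 p) (rr_lt hr) hq hp (esym e1) (esym e2).
  rewrite /Lam r1e r2e in L1 L2 *.
  rewrite hB !mulnDr [M * q + _]addnC [M * q' + _]addnC => H; apply: arM2 H _.
  by rewrite leq_mul2l L2 orbT.
- have he : eqpt p q.
    move: hr; rewrite /rr /eqpt => /eqP; rewrite eqn_exp2l; last lia. by [].
  rewrite he.
  have hC : M * (p + q) + M * 2 <= M * (p' + q') by rewrite -mulnDr leq_mul2l; apply/orP; right; clear -hp hq; lia.
  have hD : M * (k1.+2) = M * 2 + M * k1 by rewrite -mulnDr.
  rewrite /= muln1 hB !muln0 hD.
  exact: arE hC hL.
Qed.

Definition good (x : nat * nat) := sym c1 x.1 == sym c2 x.2.

Lemma arS (fx fy fl a b ex cy : nat) : fx + a <= fy + ex -> fy + b <= fl + cy ->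
  fx + (a + b) <= fl + (ex + cy).
Proof. lia. Qed.

Lemma sum_path x s : path rel2 x s -> all good (x :: s) ->
  F x.1 x.2 + M * k1.+2 * size s <= F (last x s).1 (last x s).2 + M * k1 * count (fun y => eqpt y.1 y.2) (x :: s).
Proof.
elim: s x => [|y s IH] x.
  by move=> _ _; rewrite /= muln0 addn0 leq_addr.
move=> /andP [/andP [h1 h2] hp] /andP [gx /andP [gy gs]].
have H2 := step h1 h2 (eqP gx) (eqP gy).
have gys : all good (y :: s) by apply/andP; split.
have H1 := IH y hp gys.
rewrite (_ : size (y :: s) = (size s).+1) // mulnS.
rewrite (_ : count (fun y => eqpt y.1 y.2) (x :: y :: s) = eqpt x.1 x.2 + count (fun y => eqpt y.1 y.2) (y :: s)) //.
rewrite mulnDr (_ : last x (y :: s) = last y s) //.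
exact: arS H2 H1.
Qed.

Lemma F_ge p q : M * (p + q) <= F p q.
Proof. by rewrite /F -!addnA leq_addr. Qed.

Lemma F_le p q : F p q <= M * (p + q) + M * Cb + k1 * (p + q) + M * Cb * (p %/ T + q %/ T).
Proof.
rewrite /F; apply: leq_add => //; apply: leq_add; first apply: leq_add => //.
- by rewrite leq_mul2l; apply/orP; right; apply: leq_trans (Psi_le p q); apply: leq_addr.
- by rewrite leq_mul2l; apply/orP; right; apply: leq_add; apply: Lam_le.
Qed.

End Core.

Lemma positions_mask m : positions m = mask m (iota 0 (size m)).
Proof.
rewrite /positions filter_mask; congr mask.
by rewrite -{3}(mkseq_nth false m).
Qed.

Lemma map_positions (T : Type) (x0 : T) (w : seq T) m : size m = size w ->
  map (nth x0 w) (positions m) = mask m w.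
Proof.
by move=> hs; rewrite positions_mask map_mask hs -/(mkseq _ _) mkseq_nth.
Qed.

Lemma positions_sorted m : sorted ltn (positions m).
Proof.
rewrite positions_mask; apply: (subseq_sorted ltn_trans (mask_subseq _ _)).
exact: iota_ltn_sorted.
Qed.

Lemma positions_lt m p : p \in positions m -> p < size m.
Proof. by rewrite positions_mask => /mem_mask; rewrite mem_iota. Qed.

Lemma zip_sorted (a b : seq nat) : sorted ltn a -> sorted ltn b -> size a = size b ->
  sorted rel2 (zip a b).
Proof.
case: a b => [|x a] [|y b] //= ha hb [hs].
elim: a b x y ha hb hs => [|x' a IH] [|y' b] //= x y /andP [h1 ha] /andP [h2 hb] [hs].
by rewrite /rel2 /= h1 h2 /=; apply: IH.
Qed.

Lemma zip_all (T1 : eqType) (f : nat -> T1) (g : nat -> T1) (a b : seq nat) (P : T1 -> T1 -> bool) :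
  (forall u, P u u) -> map f a = map g b -> all (fun x => P (f x.1) (g x.2)) (zip a b).
Proof.
move=> hP; elim: a b => [|x a IH] [|y b] //= [e1 e2].
by rewrite e1 hP IH.
Qed.

Lemma path_last (x : nat * nat) s : path rel2 x s -> x.1 <= (last x s).1 /\ x.2 <= (last x s).2.
Proof.
elim: s x => [|y s IH] x //= /andP [/andP [h1 h2] hp].
have [l1 l2] := IH y hp; split; [apply: leq_trans l1 | apply: leq_trans l2]; exact: ltnW.
Qed.

Lemma sorted_iota_subseq (I : seq nat) n : sorted ltn I -> all (fun i => i < n) I -> subseq I (iota 0 n).
Proof.
move=> hs ha.
have -> : I = filter (mem I) (iota 0 n).
  apply: (irr_sorted_eq ltn_trans ltnn) => //.
    by apply: sorted_filter; [exact: ltn_trans | exact: iota_ltn_sorted].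
  move=> i; rewrite mem_filter mem_iota /= add0n.
  case hi: (i \in I) => //=. by rewrite (allP ha i hi).
exact: filter_subseq.
Qed.

Lemma span_le m : span_mask m <= size m.
Proof.
rewrite /span_mask.
case e: (positions m) => [|x s] //.
have hl : last x s \in positions m by rewrite e mem_last.
have := positions_lt hl. lia.
Qed.

Lemma zip_all2 (a b : pred nat) (s t : seq nat) : all a s -> all b t ->
  all (fun x => a x.1 && b x.2) (zip s t).
Proof.
elim: s t => [|x s IH] [|y t] //= /andP [h1 h2] /andP [h3 h4].
by rewrite h1 h3 IH.
Qed.

Lemma arFin (M k2 k1 s S X Y mcb mcbB mcb2n a b e t2L : nat) :
  X + M * k2 * s <= Y + mcb + a + mcbB + e ->
  mcb + mcbB <= mcb2n -> a <= b -> e <= t2L -> 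
  S + X = Y + M * 2 -> M * k2 = M * k1 + M * 2 ->
  M * k2 * s.+1 <= S + M * k1 + mcb2n + b + t2L.
Proof. move=> h1 h2 h3 h4 h5 h6. rewrite mulnS. lia. Qed.

Lemma core_nat (k1 M K T n : nat) (f1 f2 : nat -> nat) (w1 w2 : seq nat) (m1 m2 : bitseq) (L : nat) :
  0 < k1 -> 1 < M -> 1 < K -> T = k1.+1 * M ^ K.-1 -> (forall i, f1 i < K) -> (forall i, f2 i < K) ->
  size w1 = n * T -> size w2 = n * T ->
  (forall p, p < n * T -> nth 0 w1 p = sym k1 M T f1 p) ->
  (forall p, p < n * T -> nth 0 w2 p = sym k1 M T f2 p) ->
  size m1 = size w1 -> size m2 = size w2 -> mask m1 w1 = mask m2 w2 ->
  (forall I J, sorted ltn I -> sorted ltn J -> map f1 I = map f2 J -> all (fun i => i < n) I ->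
      all (fun i => i < n) J -> size I <= L) ->
  M * k1.+2 * size (mask m1 w1) <= M * (span_mask m1 + span_mask m2) + M * k1 + 2 * M * Cb k1 M K * n
     + 2 * k1 * (n * T) + 2 * M * k1 * T * L.
Proof.
move=> hk hM hK hT hf1 hf2 sw1 sw2 hn1 hn2 sm1 sm2 hm hL.
have T0 : 0 < T by rewrite hT muln_gt0 expn_gt0; lia.
have e1 := map_positions 0 sm1. have e2 := map_positions 0 sm2.
have e12 : map (nth 0 w1) (positions m1) = map (nth 0 w2) (positions m2) by rewrite e1 e2.
have sz : size (positions m1) = size (positions m2) by rewrite -(size_map (nth 0 w1)) e12 size_map.
have hl : size (mask m1 w1) = size (positions m1) by rewrite -e1 size_map.
have hb1 : all (fun p => p < n * T) (positions m1) by apply/allP => p /positions_lt; rewrite sm1 sw1.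
have hb2 : all (fun p => p < n * T) (positions m2) by apply/allP => p /positions_lt; rewrite sm2 sw2.
have hz := zip_all2 hb1 hb2.
have hg := zip_all (P := fun u v : nat => u == v) (fun u => eqxx u) e12.
have hsrt := zip_sorted (positions_sorted m1) (positions_sorted m2) sz.
have hu1 : unzip1 (zip (positions m1) (positions m2)) = positions m1 by rewrite unzip1_zip // sz.
have hu2 : unzip2 (zip (positions m1) (positions m2)) = positions m2 by rewrite unzip2_zip // sz.
move: hz hg hsrt hu1 hu2.
case eP: (zip (positions m1) (positions m2)) => [|x s].
  by move=> _ _ _ /= h _; rewrite hl -h /= muln0.
move=> hz hg hsrt hu1 hu2.
have hp : path rel2 x s by [].
have hgood : all (good k1 M T f1 f2) (x :: s).
  apply/allP => y hy. have := allP hz y hy => /andP [y1 y2].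
  have := allP hg y hy. by rewrite /good hn1 // hn2.
have Hs := sum_path hk hM hK hT hf1 hf2 hp hgood.
have Fg := F_ge k1 M K T f1 f2 x.1 x.2.
have Fl := F_le hk hM hK hT hf1 hf2 (last x s).1 (last x s).2.
have [I [J [[sI sJ] mIJ subI subJ hcnt]]] := chain_count f1 f2 T0 hsrt.
have aI : all (fun i => i < n) I.
  apply/allP => i /subI /mapP [y hy ->]; have := allP hz y hy => /andP [y1 _]. by rewrite ltn_divLR.
have aJ : all (fun i => i < n) J.
  apply/allP => i /subJ /mapP [y hy ->]; have := allP hz y hy => /andP [_ y2]. by rewrite ltn_divLR.
have hIL := hL I J sI sJ mIJ aI aJ.
have hlast : (last x s \in x :: s) by exact: mem_last.
have := allP hz _ hlast => /andP [l1 l2].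
have [pl1 pl2] := path_last hp.
have sp1 : span_mask m1 = ((last x s).1 - x.1).+1 by rewrite /span_mask -hu1 /= last_map.
have sp2 : span_mask m2 = ((last x s).2 - x.2).+1 by rewrite /span_mask -hu2 /= last_map.
have hl' : size (mask m1 w1) = (size s).+1 by rewrite hl -hu1 /= size_map.
rewrite hl'.
set pl := (last x s).1 in sp1 l1 pl1 Hs Fl *; set ql := (last x s).2 in sp2 l2 pl2 Hs Fl *.
have d1 : pl %/ T < n by rewrite ltn_divLR.
have d2 : ql %/ T < n by rewrite ltn_divLR.
apply: (arFin (Y := M * (pl + ql)) (X := M * (x.1 + x.2)) (mcbB := M * Cb k1 M K * (pl %/ T + ql %/ T))
   (a := k1 * (pl + ql)) (e := M * k1 * count (fun y => eqpt T f1 f2 y.1 y.2) (x :: s))).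
- exact: leq_trans (leq_add Fg (leqnn _)) (leq_trans Hs (leq_add Fl (leqnn _))).
- have h : (pl %/ T + ql %/ T).+1 <= 2 * n by move: d1 d2; generalize (pl %/ T) (ql %/ T); clear; lia.
  have := leq_mul (leqnn (M * Cb k1 M K)) h. rewrite mulnS => h'. apply: leq_trans h' _.
  move: (Cb k1 M K) => cb; clear; lia.
- have h : pl + ql <= 2 * (n * T) by move: l1 l2; clear; lia.
  have := leq_mul (leqnn k1) h. move=> h'. apply: leq_trans h' _. clear; lia.
- have h : count (fun y => eqpt T f1 f2 y.1 y.2) (x :: s) <= 2 * T * L.
    apply: leq_trans hcnt _. rewrite leq_mul2l hIL orbT //.
  have := leq_mul (leqnn (M * k1)) h. move=> h'. apply: leq_trans h' _. clear; lia.
- rewrite -!mulnDr; congr (M * _). rewrite sp1 sp2. move: pl1 pl2; clear. lia.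
- by rewrite -mulnDr addn2.
Qed.

Lemma nth_flat (A : Type) (x0 : A) (T : nat) (ss : seq (seq A)) p :
  0 < T -> all (fun s => size s == T) ss -> p < size ss * T ->
  nth x0 (flatten ss) p = nth x0 (nth [::] ss (p %/ T)) (p %% T).
Proof.
move=> T0; elim: ss p => [|s ss IH] p //= /andP [/eqP hs ha] hp.
rewrite nth_cat hs.
case: (ltnP p T) => h.
  by rewrite divn_small // modn_small.
have -> : p = (p - T) + T by rewrite subnK.
rewrite divnDr ?dvdnn // divnn T0 addn1 /= modnDr addnK.
apply: IH => //. move: hp h; rewrite mulSn; clear; lia.
Qed.

Lemma size_flat (A : Type) (T : nat) (ss : seq (seq A)) :
  all (fun s => size s == T) ss -> size (flatten ss) = size ss * T.
Proof.
elim: ss => //= s ss IH /andP [/eqP hs ha]. by rewrite size_cat hs IH // mulSn.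
Qed.

Lemma mod_block p T r k : (k * r) %| T -> 0 < r -> ((p %% T) %/ r) %% k = (p %/ r) %% k.
Proof.
move=> /dvdnP [j hj] r0.
have e : p %/ T * T = (p %/ T * j * k) * r by rewrite hj !mulnA.
have hd : r %| p %/ T * T by rewrite e dvdn_mull.
rewrite {2}(divn_eq p T) divnDl // e mulnK // modnMDl //.
Qed.

Section Enc.
Variables (k1 M K T : nat).
Hypotheses (hk : 1 <= k1) (hM : 2 <= M) (hK : 2 <= K) (hT : T = k1.+1 * M ^ K.-1).

Definition tseq (a : nat) : seq 'I_k1.+1 := mkseq (fun i => inord ((i %/ M ^ a) %% k1.+1)) T.

Lemma tseq_size a : size (tseq a) == T.
Proof. by rewrite size_mkseq. Qed.

Definition tau (a : 'I_K) : T.-tuple 'I_k1.+1 := Tuple (tseq_size a).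

Lemma tau_inj : injective tau.
Proof.
have key : forall a b : 'I_K, a < b -> tau a != tau b.
  move=> a b hab; apply/negP => /eqP /(congr1 (fun t : T.-tuple _ => val (nth ord0 (val t) (M ^ a)))).
  have hi : M ^ a < T.
    rewrite hT; apply: (@leq_trans (M ^ K.-1)); last by rewrite leq_pmull.
    rewrite ltn_exp2l; last lia. have := ltn_ord b. lia.
  rewrite /= /tseq !nth_mkseq // !inordK ?ltn_mod //.
  rewrite divnn expn_gt0 (ltnW hM) /= divn_small; last by rewrite ltn_exp2l.
  rewrite mod0n modn_small //; lia.
move=> a b e; case: (ltngtP a b) => h.
- by move: (key _ _ h); rewrite e eqxx.
- by move: (key _ _ h); rewrite e eqxx.
- exact: val_inj.
Qed.

Definition cf (c : seq 'I_K) (i : nat) : nat := nth 0 (map val c) i.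

Lemma cf_lt c i : cf c i < K.
Proof.
rewrite /cf; case: (ltnP i (size c)) => h.
  have : nth 0 (map val c) i \in map val c by apply: mem_nth; rewrite size_map.
  by case/mapP => x _ ->; apply: ltn_ord.
by rewrite nth_default ?size_map //; lia.
Qed.

Lemma x0K_proof : 0 < K. Proof. exact: ltn_trans (ltnSn 0) hK. Qed.
Definition x0K : 'I_K := Ordinal x0K_proof.

Lemma size_encode c : size (encode tau c) = size c * T.
Proof.
rewrite /encode (@size_flat _ T) ?size_map //.
by apply/allP => s /mapP [a _ ->]; rewrite size_tuple.
Qed.

Lemma kr_dvd (a : nat) : a < K -> k1.+1 * M ^ a %| T.
Proof. move=> ha; rewrite hT dvdn_pmul2l // dvdn_exp2l //; lia. Qed.

Lemma encode_nth (c : seq 'I_K) p : p < size c * T ->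
  val (nth ord0 (encode tau c) p) = sym k1 M T (cf c) p.
Proof.
move=> hp.
have T0 : 0 < T by rewrite hT muln_gt0 expn_gt0; lia.
have hpc : p %/ T < size c by rewrite ltn_divLR.
rewrite /encode (@nth_flat _ ord0 T) //; last first.
- by rewrite size_map.
- by apply/allP => s /mapP [a _ ->]; rewrite size_tuple.
rewrite (nth_map x0K) // /= /tseq nth_mkseq ?ltn_pmod // inordK ?ltn_mod //.
have ecf : cf c (p %/ T) = nth x0K c (p %/ T) by rewrite /cf (nth_map x0K).
rewrite /sym /rr ecf; apply: mod_block; last by rewrite expn_gt0; lia.
apply: kr_dvd; exact: ltn_ord.
Qed.

End Enc.

Import Order.TTheory GRing.Theory Num.Theory.

Lemma LCS_ge_mask (A : eqType) (w1 w2 : seq A) (m1 m2 : bitseq) :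
  size m1 = size w1 -> size m2 = size w2 -> mask m1 w1 = mask m2 w2 -> size (mask m1 w1) <= LCS w1 w2.
Proof.
move=> h1 h2 h.
pose t1 : (size w1).-tuple bool := Tuple (introT eqP h1).
pose t2 : (size w2).-tuple bool := Tuple (introT eqP h2).
rewrite /LCS; apply: leq_trans (leq_bigmax t1).
apply: leq_trans (leq_bigmax t2) => /=.
by rewrite h eqxx.
Qed.

Lemma LCS_ge (K n : nat) (c c' : seq 'I_K) (I J : seq nat) : size c = n -> size c' = n ->
  sorted ltn I -> sorted ltn J ->
  map (fun i => nth 0 (map val c) i) I = map (fun i => nth 0 (map val c') i) J ->
  all (fun i => i < n) I -> all (fun i => i < n) J -> size I <= LCS c c'.
Proof.
move=> hc hc' sI sJ hm aI aJ.
case: I sI hm aI => [|i I] sI hm aI; first by [].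
have hi : i < n by case/andP: aI.
case: c hc hm => [|x0 c] hc hm; first by rewrite -hc in hi.
set C := x0 :: c in hc hm *.
have hz1 : map val (map (nth x0 C) (i :: I)) = map (fun i => nth 0 (map val C) i) (i :: I).
  rewrite -map_comp; apply/eq_in_map => j hj. rewrite (nth_map x0) // hc. exact: (allP aI).
have hJ : size J = size (i :: I) by rewrite -(size_map (fun i => nth 0 (map val c') i)) -hm size_map.
case: c' hc' hm hJ => [|y0 c'] hc' hm hJ.
  case: J sJ hm aJ hJ => [|j J] //= sJ hm aJ hJ. by move: aJ; rewrite -hc'.
set C' := y0 :: c' in hc' hm *.
have hz2 : map val (map (nth y0 C') J) = map (fun i => nth 0 (map val C') i) J.
  rewrite -map_comp; apply/eq_in_map => j hj. rewrite (nth_map y0) // hc'. exact: (allP aJ).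
have hz : map (nth x0 C) (i :: I) = map (nth y0 C') J.
  by apply: (inj_map val_inj); rewrite hz1 hz2.
have s1 : subseq (map (nth x0 C) (i :: I)) C.
  have := map_subseq (nth x0 C) (sorted_iota_subseq sI aI).
  by rewrite -/(mkseq _ _) -hc mkseq_nth.
have s2 : subseq (map (nth y0 C') J) C'.
  have := map_subseq (nth y0 C') (sorted_iota_subseq sJ aJ).
  by rewrite -/(mkseq _ _) -hc' mkseq_nth.
case/subseqP: s1 => m1 sm1 e1. case/subseqP: s2 => m2 sm2 e2.
have := LCS_ge_mask sm1 sm2 (etrans (esym e1) (etrans hz e2)).
by rewrite -e1 size_map.
Qed.

Lemma LCS_le_size (A : eqType) (w1 w2 : seq A) : LCS w1 w2 <= size w1.
Proof.
rewrite /LCS; elim/big_ind: _ => //; first by move=> x y; rewrite geq_max => -> ->.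
move=> t1 _; elim/big_ind: _ => //; first by move=> x y; rewrite geq_max => -> ->.
move=> t2 _; case: ifP => // _.
by rewrite size_mask ?size_tuple //; move: (count_size id t1); rewrite size_tuple.
Qed.

Lemma LCS_code_ge (K n : nat) (C1 : {set n.-tuple 'I_K}) (c c' : n.-tuple 'I_K) :
  c \in C1 -> c' \in C1 -> c != c' -> LCS c c' <= LCS_code [seq val c | c <- enum C1].
Proof.
move=> hc hc' hne.
rewrite /LCS_code.
have m1 : val c \in [seq val c | c <- enum C1] by rewrite map_f // mem_enum.
have m2 : val c' \in [seq val c | c <- enum C1] by rewrite map_f // mem_enum.
have ne : val c' != val c by rewrite (inj_eq val_inj) eq_sym.
apply: leq_trans (@leq_bigmax_seq _ _ _ _ (val c) m1 isT).
exact: (@leq_bigmax_seq _ _ (fun c2 => c2 != val c) _ (val c') m2 ne).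
Qed.

Local Open Scope ring_scope.

Lemma bigmaxR_seq (R : realFieldType) (I : eqType) (r : seq I) (P : pred I) (F : I -> nat) (B : R) :
  0 <= B -> (forall i, i \in r -> P i -> (F i)%:R <= B) -> (\big[maxn/0%N]_(i <- r | P i) F i)%:R <= B.
Proof.
move=> B0 h; rewrite big_seq_cond; elim/big_ind: _ => //.
  by move=> x y hx hy; case: (leqP x y) => hxy; rewrite ?(maxn_idPr _) ?(maxn_idPl _) // ltnW.
by move=> i /andP [hi hp]; apply: h.
Qed.

Lemma bigmaxR_fin (R : realFieldType) (I : finType) (F : I -> nat) (B : R) :
  0 <= B -> (forall i, (F i)%:R <= B) -> (\big[maxn/0%N]_i F i)%:R <= B.
Proof.
move=> B0 h; elim/big_ind: _ => //.
by move=> x y hx hy; case: (leqP x y) => hxy; rewrite ?(maxn_idPr _) ?(maxn_idPl _) // ltnW.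
Qed.

Import Order.TTheory GRing.Theory Num.Theory.
Local Open Scope ring_scope.

Lemma real_final (R : realFieldType) (k1 M P n span l L : nat) (g : R) :
  0 < g -> 1 <= g * n%:R -> k1.+1%:R <= M%:R * g -> L%:R <= g * n%:R -> (1 <= k1)%N -> (0 < P)%N ->
  (M * k1.+2 * l <= M * span + M * k1 + 2 * M * (k1 * P) * n + 2 * k1 * (n * (k1.+1 * (M * P)))
     + 2 * M * k1 * (k1.+1 * (M * P)) * L)%N ->
  k1.+2%:R * l%:R - 4 * g * k1.+1%:R * (n * (k1.+1 * (M * P)))%:R <= span%:R.
Proof.
move=> g0 gn kM gL k1p P0 H.
have M0 : (0 < M)%N.
  rewrite lt0n; apply/negP => /eqP M0; move: kM; rewrite M0 => kM.
  have : 0 < k1.+1%:R :> R by rewrite ltr0n.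
  lra.
have Mr : 0 < M%:R :> R by rewrite ltr0n.
move: H; rewrite -(ler_nat R) !natrD !natrM => H.
idtac.
have e1 : k1.+2%:R = k1%:R + 2 :> R by rewrite -addn2 natrD.
have e2 : k1.+1%:R = k1%:R + 1 :> R by rewrite -addn1 natrD.
rewrite e1 e2 in H *. rewrite e2 in kM.
have k1r : 1 <= k1%:R :> R by rewrite ler1n.
have pr : 1 <= P%:R :> R by rewrite ler1n.
have nn0 : 0 <= n%:R :> R by [].
have ll0 : 0 <= l%:R :> R by [].
have LL0 : 0 <= L%:R :> R by [].
move: H; set m := M%:R; set k := k1%:R; set p := P%:R; set nn := n%:R; set ll := l%:R; set s := span%:R; set LL := L%:R.
move=> H.
rewrite -/m -/k -/p -/nn -/ll -/s -/LL in H gn gL kM k1r pr nn0 ll0 LL0 *.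
set N := nn * ((k + 1) * (m * p)).
have N0 : 0 <= N by rewrite /N; apply: mulr_ge0 => //; apply: mulr_ge0; [lra | apply: mulr_ge0; lra].
have hN1 : (k + 1) <= g * N.
  rewrite /N mulrA. have : 1 * ((k+1) * 1) <= (g * nn) * ((k+1) * (m * p)).
    apply: ler_pM => //; try lra. apply: ler_pM => //; try lra.
    have : 1 * 1 <= m * p by apply: ler_pM => //; try lra; rewrite ler1n.
    lra.
  lra.
have f1 : m * k * 2 <= m * k * (g * N) by apply: ler_wpM2l; [apply: mulr_ge0; lra | lra].
have f2 : (2 * m * (k * p) * nn) * 4 <= (2 * m * (k * p) * nn) * ((k + 1) * (k + 1)).
  apply: ler_wpM2l; first by repeat apply: mulr_ge0; lra.
  have : 2 * 2 <= (k + 1) * (k + 1) by apply: ler_pM; lra.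
  lra.
have f3 : 2 * k * N * (k + 1) <= 2 * k * N * (m * g).
  by apply: ler_wpM2l; [repeat apply: mulr_ge0; lra | lra].
have f4 : 2 * k * N * 2 <= 2 * k * N * (k + 1).
  by apply: ler_wpM2l; [repeat apply: mulr_ge0; lra | lra].
have f5 : 2 * m * k * ((k + 1) * (m * p)) * LL <= 2 * m * k * ((k + 1) * (m * p)) * (g * nn).
  by apply: ler_wpM2l; [repeat apply: mulr_ge0; lra | lra].
have f6 : 4 * m * g * k * N <= 4 * m * g * (k + 1) * N.
  rewrite -!mulrA; apply: ler_wpM2l; first lra. apply: ler_wpM2l; first lra. apply: ler_wpM2l; first lra.
  apply: ler_wpM2r => //; lra.
rewrite -(ler_pM2l Mr).
unfold N in *.
lra.
Qed.

Unset Implicit Arguments.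
Import Order.TTheory GRing.Theory Num.Theory.
Local Open Scope ring_scope.

Lemma LCS_code_le_n (R : realFieldType) (K n : nat) (C1 : {set n.-tuple 'I_K}) :
  (LCS_code [seq val c | c <- enum C1])%:R <= n%:R :> R.
Proof.
rewrite /LCS_code; apply: bigmaxR_seq => // w1 /mapP [c _ ->] _.
apply: bigmaxR_seq => // w2 _ _.
by rewrite ler_nat; apply: leq_trans (LCS_le_size _ _) _; rewrite size_tuple.
Qed.

Lemma gamma_facts (R : realFieldType) (K n : nat) (C1 : {set n.-tuple 'I_K}) (g : R) :
  0 < g -> (1 <= n)%N -> (LCS_code [seq val c | c <- enum C1])%:R = g * n%:R ->
  1 <= g * n%:R /\ g <= 1.
Proof.
move=> g0 hn hL.
have n0 : 0 < n%:R :> R by rewrite ltr0n.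
have L0 : (0 < LCS_code [seq val c | c <- enum C1])%N.
  by rewrite -(ltr0n R) hL mulr_gt0.
split; first by rewrite -hL ler1n.
have := @LCS_code_le_n R K n C1; rewrite hL => h.
rewrite -(ler_pM2r n0) mul1r //.
Qed.

Theorem theorem3p2 (R : realFieldType) (K k : nat) (gamma : R) :
  (2 <= K)%N -> (2 <= k)%N -> 0 < gamma ->
  exists T : nat, T%:R <= 32 * (2 * k%:R / gamma) ^+ K /\
  forall (n : nat) (C1 : {set n.-tuple 'I_K}),
    (1 <= n)%N -> (1 < #|C1|)%N ->
    (LCS_code [seq val c | c <- enum C1])%:R = gamma * n%:R ->
    exists tau : 'I_K -> T.-tuple 'I_k,
      injective tau /\
      let C2 := [seq encode tau (val c) | c <- enum C1] in
      let N := (n * T)%N in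
      (forall (w1 w2 : seq 'I_k) (m1 m2 : bitseq),
          w1 \in C2 -> w2 \in C2 -> w1 != w2 ->
          is_common_subseq w1 w2 m1 m2 ->
          (cs_span m1 m2)%:R >= k.+1%:R * (cs_len w1 m1)%:R - 4 * gamma * k%:R * N%:R) /\
      (LCS_code C2)%:R <= (2 + 4 * gamma * k%:R) / k.+1%:R * N%:R /\
      (LCS_code C2)%:R < (2 / k.+1%:R + 4 * gamma) * N%:R.
Proof.
move=> hK hk g0.
have lam0 : 0 <= 2 * k%:R / gamma by apply: divr_ge0; [apply: mulr_ge0 | apply: ltW].
case: (classic (exists n0 (C0 : {set n0.-tuple 'I_K}), (1 <= n0)%N /\
    (LCS_code [seq val c | c <- enum C0])%:R = gamma * n0%:R)) => [Hex|Hno]; last first.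
  exists 0%N; split.
    by rewrite mulr_ge0 // exprn_ge0.
  move=> n C1 h1 h2 h3; exfalso; apply: Hno; exists n, C1; split => //.
case: Hex => n0 [C0 [hn0 hL0]].
have [gn0 g1] := @gamma_facts R K n0 C0 gamma g0 hn0 hL0.
case: k hk lam0 => [|k1] // hk lam0.
have hk1 : (1 <= k1)%N by [].
set lam := 2 * k1.+1%:R / gamma in lam0 *.
have n00 : 0 < n0%:R :> R by rewrite ltr0n.
have lam_ge : 2 * k1.+1%:R <= lam.
  rewrite /lam ler_pdivlMr //. 
  have : 0 <= 2 * k1.+1%:R :> R by apply: mulr_ge0.
  nra.
have lam_le : lam <= (2 * k1.+1 * n0)%:R.
  rewrite /lam ler_pdivrMr // natrM natrM.
  have : 0 <= 2 * k1.+1%:R :> R by apply: mulr_ge0.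
  nra.
pose P := fun m : nat => m%:R <= lam.
have exP : exists m, P m by exists 0%N; rewrite /P.
have ubP : forall m, P m -> (m <= 2 * k1.+1 * n0)%N.
  by move=> m hm; rewrite -(ler_nat R); apply: le_trans hm lam_le.
case: (ex_maxnP exP ubP) => M hM hmax.
have M2 : (2 <= M)%N.
  apply: hmax; rewrite /P; apply: le_trans lam_ge.
  have : 1 <= k1.+1%:R :> R by rewrite ler1n.
  rewrite (_ : 2%:R = 2 :> R) //. lra.
have hMlt : lam < M.+1%:R.
  rewrite ltNge; apply/negP => h. have := hmax _ h. by rewrite ltnn.
have kMg : k1.+1%:R <= M%:R * gamma.
  move: hMlt; rewrite /lam ltr_pdivrMr // -addn1 natrD => h.
  have : 1 <= k1.+1%:R :> R by rewrite ler1n.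
  nra.
set T := (k1.+1 * M ^ K.-1)%N.
have hT : T = (k1.+1 * M ^ K.-1)%N by [].
have hM1 : (1 < M)%N by [].
exists T; split.
  rewrite hT natrM natrX.
  have -> : lam ^+ K = lam * lam ^+ K.-1 by rewrite -exprS; congr (_ ^+ _); case: (K) hK.
  have hM0 : (M%:R : R) \in Num.nneg by rewrite nnegrE.
  have hl0 : lam \in Num.nneg by rewrite nnegrE.
  have h1 : M%:R ^+ K.-1 <= lam ^+ K.-1 := lerXn2r K.-1 hM0 hl0 hM.
  have h2 : k1.+1%:R <= 32 * lam.
    have : 0 <= k1.+1%:R :> R by [].
    lra.
  rewrite mulrA; apply: ler_pM; [by [] | by apply: exprn_ge0 | exact: h2 | exact: h1].
move=> n C1 hn hC hLC.
have [gn g1'] := @gamma_facts R K n C1 gamma g0 hn hLC.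
have T0 : (0 < T)%N by rewrite hT muln_gt0 /= expn_gt0 (ltnW hM1).
exists (tau k1 M T); split; first exact: (tau_inj hk1 hM1 hK hT).
have eK : K.-1 = (K - 2).+1 by case: (K) hK => [|[|K']] // _; rewrite !subSS subn0.
have eT : T = (k1.+1 * (M * M ^ (K - 2)))%N by rewrite hT eK expnS.
have claimA : forall (w1 w2 : seq 'I_k1.+1) (m1 m2 : bitseq),
    w1 \in [seq encode (tau k1 M T) (val c) | c <- enum C1] ->
    w2 \in [seq encode (tau k1 M T) (val c) | c <- enum C1] -> w1 != w2 ->
    is_common_subseq w1 w2 m1 m2 ->
    k1.+2%:R * (cs_len w1 m1)%:R - 4 * gamma * k1.+1%:R * (n * T)%:R <= (cs_span m1 m2)%:R.
  move=> w1 w2 m1 m2 /mapP [c hc ->] /mapP [c' hc' ->] hne /and3P [/eqP sm1 /eqP sm2 /eqP hm].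
  rewrite !mem_enum in hc hc'.
  have cc : c != c' by apply: contraNneq hne => ->.
  have hLc := LCS_code_ge hc hc' cc.
  have hLr : (LCS c c')%:R <= gamma * n%:R by rewrite -hLC ler_nat.
  have sz1 : size (map val (encode (tau k1 M T) (val c))) = (n * T)%N by rewrite size_map size_encode size_tuple.
  have sz2 : size (map val (encode (tau k1 M T) (val c'))) = (n * T)%N by rewrite size_map size_encode size_tuple.
  have nth1 : forall p, (p < n * T)%N -> nth 0%N (map val (encode (tau k1 M T) (val c))) p = sym k1 M T (cf (val c)) p.
    move=> p hp; rewrite (nth_map ord0) ?size_encode ?size_tuple //; apply: encode_nth => //; by rewrite size_tuple.
  have nth2 : forall p, (p < n * T)%N -> nth 0%N (map val (encode (tau k1 M T) (val c'))) p = sym k1 M T (cf (val c')) p.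
    move=> p hp; rewrite (nth_map ord0) ?size_encode ?size_tuple //; apply: encode_nth => //; by rewrite size_tuple.
  have hmask : mask m1 (map val (encode (tau k1 M T) (val c))) = mask m2 (map val (encode (tau k1 M T) (val c'))).
    by rewrite -!map_mask hm.
  have s1 : size m1 = size (map val (encode (tau k1 M T) (val c))) by rewrite size_map.
  have s2 : size m2 = size (map val (encode (tau k1 M T) (val c'))) by rewrite size_map.
  have hcore := core_nat (L := LCS c c') hk1 hM1 hK hT (cf_lt hk1 hM1 hK hT (val c)) (cf_lt hk1 hM1 hK hT (val c'))
     sz1 sz2 nth1 nth2 s1 s2 hmask
     (fun I J sI sJ hIJ aI aJ => LCS_ge (size_tuple c) (size_tuple c') sI sJ hIJ aI aJ).
  rewrite -map_mask size_map /Cb in hcore.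
  rewrite /cs_len /cs_span.
  move: hcore hLr.
  move: (size (mask m1 (encode (tau k1 M T) (val c)))) (span_mask m1 + span_mask m2) (LCS _ _) => l sp L hcore hLr.
  have P0 : (0 < M ^ (K - 2))%N by rewrite expn_gt0 (ltnW hM1).
  rewrite eT in hcore *.
  exact: real_final g0 gn kMg hLr hk1 P0 hcore.
move=> C2 N.
have N0 : (0 < N)%N by rewrite /N muln_gt0 hn T0.
have Nr : 0 < N%:R :> R by rewrite ltr0n.
have k2r : 0 < k1.+2%:R :> R by rewrite ltr0n.
have B0 : 0 <= (2 + 4 * gamma * k1.+1%:R) / k1.+2%:R * N%:R.
  apply: mulr_ge0; last by apply: ltW.
  apply: divr_ge0; last by apply: ltW.
  have : 0 <= k1.+1%:R :> R by []. 
  have : 0 <= gamma * k1.+1%:R by apply: mulr_ge0; [apply: ltW|].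
  lra.
have claimB : (LCS_code C2)%:R <= (2 + 4 * gamma * k1.+1%:R) / k1.+2%:R * N%:R.
  rewrite /LCS_code; apply: bigmaxR_seq => // w1 hw1 _.
  apply: bigmaxR_seq => // w2 hw2 hne.
  rewrite /LCS; apply: bigmaxR_fin => // t1; apply: bigmaxR_fin => // t2.
  case: ifP => [/eqP he|_]; last by [].
  have hw1s : size w1 = N.
    by case/mapP: hw1 => c _ ->; rewrite size_encode size_tuple.
  have hw2s : size w2 = N.
    by case/mapP: hw2 => c _ ->; rewrite size_encode size_tuple.
  have hcs : is_common_subseq w1 w2 t1 t2 by rewrite /is_common_subseq !size_tuple !eqxx he eqxx.
  have hne' : w1 != w2 by rewrite eq_sym.
  have := claimA w1 w2 t1 t2 hw1 hw2 hne' hcs.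
  have hsp : (cs_span t1 t2 <= 2 * N)%N.
    rewrite /cs_span mul2n -addnn; apply: leq_add.
      by apply: leq_trans (span_le t1) _; rewrite size_tuple hw1s.
    by apply: leq_trans (span_le t2) _; rewrite size_tuple hw2s.
  move: hsp; rewrite -(ler_nat R) natrM /cs_len.
  move: (cs_span t1 t2) (size (mask t1 w1)) => sp l hsp hA.
  rewrite mulrAC ler_pdivlMr //.
  rewrite (_ : 2%:R = 2 :> R) // in hsp.
  rewrite -/N in hA. lra.
split; first exact: claimA.
split; first exact: claimB.
apply: le_lt_trans claimB _.
rewrite ltr_pM2r //.
have kr : k1.+2%:R = k1.+1%:R + 1 :> R by rewrite -addn1 natrD.
set u := k1.+2%:R^-1.
have hu : u * k1.+2%:R = 1 by rewrite /u mulVf // gt_eqF.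
have u0 : 0 < u by rewrite /u invr_gt0.
have hku : k1.+1%:R * u < 1.
  rewrite kr in hu. have : 0 < u by []. lra.
have : gamma * (k1.+1%:R * u) < gamma * 1 by rewrite ltr_pM2l.
rewrite /u -/u.
lra.
Qed.
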